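(* Let $S$ and $T$ be multisets with no element in common, and let $\pi$ be a multiset partition of $S$ and $\tau$ a multiset partition of $T$. Then \[ \tilde h_{\tilde m(\pi)}\,\tilde h_{\tilde m(\tau)}=\sum_{\theta\in\pi\#\tau}\tilde h_{\tilde m(\theta)}. \]
   Context: A multiset partition of a multiset $S$ is a multiset of nonempty multisets whose multiset union is $S$; for such $\pi$, $\tilde m(\pi)$ is the partition whose parts are the multiplicities of the distinct multisets in $\pi$. For a multiset $A$ and set $U$, $A|_U$ is the multiset of elements of $A$ lying in $U$; for a multiset partition $\theta$, $\theta|_U$ is the multiset of the $A|_U$, $A\in\theta$, with empty multisets discarded. $\pi\#\tau$ is the set of multiset partitions $\theta$ of $S\uplus T$ with $\theta|_S=\pi$ and $\theta|_T=\tau$ (restricting to the underlying sets of $S$ and $T$). $Sym=\mathbb{Q}[p_1,p_2,\ldots]$; the induced trivial character basis $\{\tilde h_\lambda\}$ is determined recursively by $h_\lambda=\sum_\sigma\tilde h_{\tilde m(\sigma)}$, the sum over all multiset partitions $\sigma$ of $\{\!\!\{1^{\lambda_1},\ldots,\ell(\lambda)^{\lambda_{\ell(\lambda)}}\}\!\!\}$. *)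

(* Defs.v *)
From HB Require Import structures.
From mathcomp Require Import all_boot all_order all_algebra all_fingroup.
From mathcomp Require Import finmap multiset.
From mathcomp Require Import monalg.
From mathcomp Require Import boolp classical_sets fsbigop.

Set Implicit Arguments.
Unset Strict Implicit.
Unset Printing Implicit Defensive.

Import GRing.Theory.
Local Open Scope mset_scope.

Section MultisetPartitions.
Variable K : choiceType.

Definition msupp (A : {mset K}) : pred K := fun x => (0 < A x)%N.

Definition is_mpart (S : {mset K}) (P : {mset {mset K}}) : Prop :=
  (forall A : {mset K}, (0 < P A)%N -> A <> mset0) /\
  (forall x : K, S x = \sum_(A <- enum_mset P) A x)%N.

Definition mrestr (U : pred K) (A : {mset K}) : {mset K} :=
  seq_mset [seq x <- enum_mset A | U x].

Definition prestr (U : pred K) (P : {mset {mset K}}) : {mset {mset K}} :=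
  seq_mset [seq mrestr U A | A <- enum_mset P & mrestr U A != mset0].

Definition msharp (S T : {mset K}) (pi tau : {mset {mset K}}) :
    set {mset {mset K}} :=
  fun theta => is_mpart (msetD S T) theta /\
               prestr (msupp S) theta = pi /\ prestr (msupp T) theta = tau.

Definition mtilde (P : {mset {mset K}}) : seq nat :=
  sort geq [seq P A | A <- finsupp P].

End MultisetPartitions.

Definition is_partition (l : seq nat) : bool :=
  sorted geq l && all (fun x => 0 < x)%N l.

(* the multiset {1^l_1, ..., ell^l_ell} *)
Definition mset_of_part (l : seq nat) : {mset nat} :=
  seq_mset (flatten [seq nseq (nth 0%N l i) i.+1 | i <- iota 0 (size l)]).

(* Symf = Q[p_1, p_2, ...], realized as the polynomial algebra over rat
   in the commuting variables indexed by nat; p_i is the variable i. *)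

Notation Symf := {malg rat[{cmonom nat}]}.

Local Open Scope ring_scope.

Definition pw (i : nat) : Symf := monalg.mkmalgU (monalg.ucm i) 1.

(* complete homogeneous symmetric function
   h_n = (1/n!) sum_{s in S_n} p_{cycle type of s} *)
Definition hn (n : nat) : Symf :=
  (n`!%:R : rat)^-1 *: \sum_(s : 'S_n) \prod_(c in porbits s) pw #|c|.

Definition hl (l : seq nat) : Symf := \prod_(i <- l) hn i.

(* Main.v *)
Require Import Defs.
From HB Require Import structures.
From mathcomp Require Import all_boot all_order all_algebra all_fingroup.
From mathcomp Require Import finmap multiset.
From mathcomp Require Import monalg.
From mathcomp Require Import boolp classical_sets fsbigop.
From mathcomp Require Import cardinality.

Set Implicit Arguments.
Unset Strict Implicit.
Unset Printing Implicit Defensive.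

Section Part1.
Local Open Scope mset_scope.


Lemma big_seq_mset {X : choiceType} (R : Type) (idx : R) (op : Monoid.com_law idx)
  (s : seq X) (F : X -> R) :
  \big[op/idx]_(x <- seq_mset s) F x = \big[op/idx]_(x <- s) F x.
Proof. exact/perm_big/perm_eq_seq_mset. Qed.

Lemma count_sum {X : choiceType} (P : pred X) (s : seq X) : count P s = \sum_(x <- s) P x.
Proof. by elim: s => [|a s IH]; rewrite ?big_nil ?big_cons //= IH. Qed.

Lemma mset_sum {X : choiceType} (A : {mset X}) a : A a = \sum_(x <- A) (x == a).
Proof. by rewrite -count_mem_mset count_sum. Qed.

Lemma perm_msetD {X : choiceType} (A B : {mset X}) : perm_eq (A `+` B) (enum_mset A ++ enum_mset B).
Proof. by apply/allP => a _ /=; rewrite count_cat !count_mem_mset msetE2. Qed.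

Lemma big_msetD {X : choiceType} (R : Type) (idx : R) (op : Monoid.com_law idx)
  (A B : {mset X}) (F : X -> R) :
  \big[op/idx]_(x <- A `+` B) F x =
  op (\big[op/idx]_(x <- A) F x) (\big[op/idx]_(x <- B) F x).
Proof. by rewrite (perm_big _ (perm_msetD A B)) big_cat. Qed.

Definition mmp {X Y : choiceType} (f : X -> Y) (A : {mset X}) : {mset Y} := seq_mset (map f A).

Lemma big_mmp {X Y : choiceType} (R : Type) (idx : R) (op : Monoid.com_law idx)
  (f : X -> Y) (A : {mset X}) (F : Y -> R) :
  \big[op/idx]_(y <- mmp f A) F y = \big[op/idx]_(x <- A) F (f x).
Proof. by rewrite /mmp big_seq_mset big_map. Qed.

Lemma mmpE {X Y : choiceType} (f : X -> Y) (A : {mset X}) y :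
  mmp f A y = \sum_(x <- A) (f x == y).
Proof. by rewrite mset_sum big_mmp. Qed.

Lemma mem_mmp {X Y : choiceType} (f : X -> Y) (A : {mset X}) y :
  (y \in mmp f A) = (y \in map f A).
Proof. by rewrite /mmp (perm_mem (perm_eq_seq_mset _)). Qed.

Lemma mmpP {X Y : choiceType} (f : X -> Y) (A : {mset X}) y :
  reflect (exists2 x, x \in A & y = f x) (y \in mmp f A).
Proof. by rewrite mem_mmp; apply: mapP. Qed.

Definition msum {X : choiceType} (P : {mset {mset X}}) : {mset X} :=
  seq_mset (flatten [seq enum_mset A | A <- enum_mset P]).

Lemma big_msum {X : choiceType} (R : Type) (idx : R) (op : Monoid.com_law idx)
  (P : {mset {mset X}}) (F : X -> R) :
  \big[op/idx]_(x <- msum P) F x =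
  \big[op/idx]_(A <- P) \big[op/idx]_(x <- enum_mset A) F x.
Proof. by rewrite big_seq_mset big_flatten big_map. Qed.

Lemma msumE {X : choiceType} (P : {mset {mset X}}) x : msum P x = \sum_(A <- P) A x.
Proof.
rewrite mset_sum big_msum; apply: eq_bigr => A _; by rewrite -mset_sum.
Qed.

Lemma mrestrE {X : choiceType} (U : pred X) (A : {mset X}) x :
  mrestr U A x = if U x then A x else 0.
Proof.
rewrite /mrestr mset_seqE; case: ifP => Ux; last first.
  by apply/count_memPn; rewrite mem_filter Ux.
rewrite count_filter -count_mem_mset.
by apply: eq_count => y /=; case: eqP => // ->; rewrite Ux.
Qed.

Lemma big_mrestr {X : choiceType} (R : Type) (idx : R) (op : Monoid.com_law idx)
  (U : pred X) (A : {mset X}) (F : X -> R) :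
  \big[op/idx]_(x <- mrestr U A) F x = \big[op/idx]_(x <- A | U x) F x.
Proof. by rewrite big_seq_mset big_filter. Qed.

Lemma big_prestr {X : choiceType} (R : Type) (idx : R) (op : Monoid.com_law idx)
  (U : pred X) (P : {mset {mset X}}) (F : {mset X} -> R) :
  \big[op/idx]_(B <- prestr U P) F B =
  \big[op/idx]_(A <- P | mrestr U A != mset0) F (mrestr U A).
Proof. by rewrite big_seq_mset big_map big_filter. Qed.

Lemma prestrE {X : choiceType} (U : pred X) (P : {mset {mset X}}) B :
  prestr U P B = \sum_(A <- P) ((mrestr U A != mset0) && (mrestr U A == B)).
Proof. by rewrite mset_sum big_prestr big_mkcond; apply: eq_bigr => A _; case: (_ != _). Qed.

Lemma mmp_comp {X Y Z : choiceType} (f : X -> Y) (g : Y -> Z) (A : {mset X}) :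
  mmp g (mmp f A) = mmp (g \o f) A.
Proof. by apply/msetP => z; rewrite !mmpE big_mmp. Qed.

Lemma eq_in_mmp {X Y : choiceType} (f g : X -> Y) (A : {mset X}) :
  {in A, f =1 g} -> mmp f A = mmp g A.
Proof. by move=> fg; rewrite /mmp (@eq_in_map _ _ f g (enum_mset A)).1. Qed.

Lemma mmp_id {X : choiceType} (A : {mset X}) : mmp id A = A.
Proof. by rewrite /mmp map_id seq_mset_id. Qed.

Lemma mmp_cancel {X Y : choiceType} (f : X -> Y) (g : Y -> X) (A : {mset X}) :
  {in A, cancel f g} -> mmp g (mmp f A) = A.
Proof. by move=> fg; rewrite mmp_comp (eq_in_mmp (g := id)) ?mmp_id. Qed.

Lemma mset0_enum {X : choiceType} (A : {mset X}) : (A == mset0) = (enum_mset A == [::]).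
Proof.
apply/eqP/eqP => [->|e]; first by rewrite enum_mset0.
by rewrite -(seq_mset_id A) e; apply/msetP => x; rewrite mset_seqE mset0E.
Qed.

Lemma mmp_eq0 {X Y : choiceType} (f : X -> Y) (A : {mset X}) : (mmp f A == mset0) = (A == mset0).
Proof.
rewrite !mset0_enum -!size_eq0 (perm_size (perm_eq_seq_mset _)) size_map.
by [].
Qed.

Lemma mset_neq0P {X : choiceType} (A : {mset X}) : reflect (exists x, x \in A) (A != mset0).
Proof.
apply: (iffP idP) => [|[x xA]].
  rewrite mset0_enum; case e: (enum_mset A) => [|a s] // _; exists a.
  by have: a \in enum_mset A by rewrite e mem_head.
by apply/negP => /eqP A0; rewrite A0 in_mset0 in xA.
Qed.
End Part1.

Section Part2.
Local Open Scope mset_scope.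

Lemma mpartP {X : choiceType} (M : {mset X}) (P : {mset {mset X}}) :
  is_mpart M P <-> (forall A, A \in P -> A != mset0) /\ M = msum P.
Proof.
split=> [[h1 h2]|[h1 h2]]; split.
- by move=> A; rewrite in_mset => /h1 /eqP.
- by apply/msetP => x; rewrite msumE h2.
- by move=> A; rewrite -in_mset => /h1 /eqP.
- by move=> x; rewrite h2 msumE.
Qed.

Lemma mpart_sum {X : choiceType} (M : {mset X}) (P : {mset {mset X}})
  (R : Type) (idx : R) (op : Monoid.com_law idx) (F : X -> R) :
  is_mpart M P ->
  \big[op/idx]_(x <- M) F x = \big[op/idx]_(A <- P) \big[op/idx]_(x <- enum_mset A) F x.
Proof. by case/mpartP => _ ->; rewrite big_msum. Qed.

Lemma mpart_intro {X : choiceType} (M : {mset X}) (P : {mset {mset X}}) :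
  (forall A, A \in P -> A != mset0) ->
  (forall x, \sum_(y <- M) (y == x) = \sum_(A <- P) \sum_(y <- enum_mset A) (y == x)) ->
  is_mpart M P.
Proof.
move=> h1 h2; apply/mpartP; split => //; apply/msetP => x.
by rewrite mset_sum h2 mset_sum big_msum.
Qed.

Lemma mpart_nz {X : choiceType} (M : {mset X}) (P : {mset {mset X}}) (A : {mset X}) :
  is_mpart M P -> A \in P -> A != mset0.
Proof. by case/mpartP => h _; apply: h. Qed.

Lemma mpart_le {X : choiceType} (M : {mset X}) (P : {mset {mset X}}) (A : {mset X}) (x : X) :
  is_mpart M P -> A \in P -> (A x <= M x)%N.
Proof.
case/mpartP => _ -> AP; rewrite msumE (big_rem A AP) /=.
exact: leq_addr.
Qed.

Lemma mpart_mem {X : choiceType} (M : {mset X}) (P : {mset {mset X}}) (A : {mset X}) (x : X) :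
  is_mpart M P -> A \in P -> x \in A -> x \in M.
Proof.
move=> hP AP; rewrite !in_mset => xA; apply: leq_trans xA _; exact: mpart_le hP AP.
Qed.

Lemma mpart_size {X : choiceType} (M : {mset X}) (P : {mset {mset X}}) :
  is_mpart M P -> size (enum_mset M) = \sum_(A <- P) size (enum_mset A).
Proof.
move=> hP; rewrite -sum1_size (mpart_sum _ _ hP); apply: eq_bigr => A _.
by rewrite sum1_size.
Qed.

Definition sing {X : choiceType} (M : {mset X}) : {mset {mset X}} :=
  mmp (fun a => [mset a]) M.

Lemma sing_part {X : choiceType} (M : {mset X}) : is_mpart M (sing M).
Proof.
apply: mpart_intro => [A /mmpP [a _ ->]|x].
  by apply/mset_neq0P; exists a; rewrite in_mset1.
rewrite big_mmp; apply: eq_bigr => a _.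
by rewrite enum_msetn big_nseq /= addn0.
Qed.

Lemma mpart_size_le {X : choiceType} (M : {mset X}) (P : {mset {mset X}}) :
  is_mpart M P -> (size (enum_mset P) <= size (enum_mset M))%N.
Proof.
move=> hP; rewrite (mpart_size hP) -sum1_size big_seq_cond [X in (_ <= X)%N]big_seq_cond.
apply: leq_sum => A /andP [AP _].
by rewrite lt0n size_eq0 -mset0_enum (mpart_nz hP).
Qed.

Lemma mset_single {X : choiceType} (A : {mset X}) :
  size (enum_mset A) = 1%N -> exists a, A = [mset a].
Proof.
case e: (enum_mset A) => [|a [|b s]] // _; exists a.
by rewrite -(seq_mset_id A) e; apply/msetP => x; rewrite mset_seqE msetnE /= addn0 eq_sym; case: (x == a).
Qed.

Lemma mset1_eq {X : choiceType} (a b : X) : ([mset a] == [mset b]) = (a == b).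
Proof. by apply/eqP/eqP => [/(msetn_inj (ltn0Sn 0))|->]. Qed.

Lemma mpart_size_eq {X : choiceType} (M : {mset X}) (P : {mset {mset X}}) :
  is_mpart M P -> size (enum_mset P) = size (enum_mset M) -> P = sing M.
Proof.
move=> hP e.
have h1 : forall A, A \in P -> size (enum_mset A) = 1%N.
  have: \sum_(A <- P) (size (enum_mset A) - 1) = 0%N.
    apply/eqP; rewrite -(eqn_add2r (\sum_(A <- P) 1)) add0n -big_split /= sum1_size.
    rewrite e (mpart_size hP); apply/eqP/eq_big_seq => A AP.
    by rewrite subn1 addn1 prednK // lt0n size_eq0 -mset0_enum (mpart_nz hP).
  move=> /eqP; rewrite sum_nat_seq_eq0 => /allP h A AP.
  have := h A AP; rewrite /= subn_eq0 => h2.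
  by apply/eqP; rewrite eqn_leq h2 lt0n size_eq0 -mset0_enum (mpart_nz hP).
have h2 : forall A, A \in P -> exists a, A = [mset a].
  by move=> A /h1 /mset_single.
case/mpartP: hP => _ ->; apply/msetP => B.
rewrite /sing mmpE big_msum mset_sum.
case: (boolP (B \in P)) => [BP|BnP].
- have [b ->] := h2 B BP; apply: eq_big_seq => C CP; have [c ->] := h2 C CP.
  rewrite enum_msetn big_nseq /= addn0 eq_sym.
  by rewrite mset1_eq.
- rewrite big1_seq; last by move=> C /andP [_ CP]; apply/eqP; rewrite eqb0; apply: contraNneq BnP => <-.
  rewrite big1_seq // => C /andP [_ CP]; have [c ec] := h2 C CP; subst C.
  rewrite enum_msetn big_nseq /= addn0; apply/eqP; rewrite eqb0.
  by apply: contraNneq BnP => <-.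
Qed.
End Part2.

Section Part3.
Local Open Scope mset_scope.

Definition subms {X : choiceType} (M : {mset X}) : set {mset X} :=
  fun A => is_true (msubset A M).

Lemma fin_subms {X : choiceType} (M : {mset X}) : finite_set (subms M).
Proof.
rewrite -(seq_mset_id M); elim: (enum_mset M) => [|a s IH].
  apply: (sub_finite_set (B := [set mset0]%classic)); last exact: finite_set1.
  move=> A; rewrite /subms /= => h; apply/eqP; rewrite -msubset0.
  apply: msubset_trans h _; apply/msubsetP => x; by rewrite mset_seqE mset0E.
rewrite mset_cons.
apply: (sub_finite_set (B := (subms (seq_mset s) `|` (fun A => a +` A) @` subms (seq_mset s))%classic)); last first.
  by rewrite finite_setU; split => //; apply: finite_image.
move=> A; rewrite /subms /= => /msubsetP h.
case: (boolP (a \in A)) => aA.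
- right; exists (A `\ a); last exact: msetB1K.
  apply/msubsetP => x; have := h x; rewrite mset1DE msetB1E.
  by case: (x == a) => /=; rewrite ?leq_subLR ?sub0n ?add0n.
- left; apply/msubsetP => x; have := h x; rewrite mset1DE.
  case: eqP => [->|_] //= _; by move: aA; rewrite -mset_eq0 => /eqP ->.
Qed.

Definition bounded {X : choiceType} (F : {fset X}) (n : nat) : set {mset X} :=
  fun A => (forall x, x \in A -> x \in F) /\ forall x, (A x <= n)%N.

Lemma fin_bounded {X : choiceType} (F : {fset X}) n : finite_set (bounded F n).
Proof.
apply: (sub_finite_set (B := subms (seq_mset (flatten (nseq n (enum_fset F)))))).
  move=> A [h1 h2]; apply/msubsetP => x.
  rewrite mset_seqE count_flatten map_nseq sumn_nseq count_uniq_mem ?fset_uniq //.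
  case: (boolP (x \in A)) => xA.
    by have := h1 x xA; rewrite -(in_fsetE F) => ->; rewrite mul1n.
  by move: xA; rewrite -mset_eq0 => /eqP ->.
exact: fin_subms.
Qed.

Lemma fin_part {X : choiceType} (M : {mset X}) : finite_set (is_mpart M).
Proof.
apply: (sub_finite_set (B := bounded (fset_set (subms M)) (size (enum_mset M)))); last first.
  exact: fin_bounded.
move=> P hP; split.
- move=> A AP; rewrite in_fset_set; last exact: fin_subms.
  rewrite inE /subms; apply/msubsetP => x; exact: mpart_le hP AP.
- move=> A; case: (boolP (A \in P)) => AP; last by move: AP; rewrite -mset_eq0 => /eqP ->.
  have /mset_neq0P [x xA] := mpart_nz hP AP.
  apply: (@leq_trans (M x)); last by rewrite -count_mem_mset count_size.
  case/mpartP: hP => _ ->; rewrite msumE mset_sum; apply: leq_sum => B _.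
  by case: eqP => [->|//]; rewrite -in_mset.
Qed.
End Part3.

Section Part4.
Local Open Scope mset_scope.

Lemma geq_total : total geq. Proof. by move=> m n; apply: leq_total. Qed.
Lemma geq_trans : transitive geq. Proof. by move=> m n p h1 h2; apply: leq_trans h2 h1. Qed.
Lemma geq_anti : antisymmetric geq.
Proof. by move=> m n /andP [h1 h2]; apply/eqP; rewrite eqn_leq; apply/andP. Qed.

Lemma mtilde_perm {X Y : choiceType} (P : {mset {mset X}}) (Q : {mset {mset Y}}) :
  perm_eq [seq P A | A <- finsupp P] [seq Q A | A <- finsupp Q] -> mtilde P = mtilde Q.
Proof. by move=> h; apply/(perm_sortP geq_total geq_trans geq_anti). Qed.

Lemma finsupp_mmp {X Y : choiceType} (f : X -> Y) (P : {mset X}) :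
  {in P &, injective f} -> perm_eq (finsupp (mmp f P)) (map f (finsupp P)).
Proof.
move=> inj; apply: uniq_perm; first exact: fset_uniq.
  rewrite map_inj_in_uniq ?fset_uniq // => x y; rewrite !msuppE; exact: inj.
move=> y; rewrite msuppE mem_mmp; apply/mapP/mapP => [[x xP ->]|[x xP ->]];
  by exists x; rewrite ?msuppE in xP *.
Qed.

Lemma mmp_inj_eq {X Y : choiceType} (f : X -> Y) (P : {mset X}) x :
  {in P &, injective f} -> x \in P -> mmp f P (f x) = P x.
Proof.
move=> inj xP; rewrite mmpE mset_sum; apply: eq_big_seq => z zP.
by rewrite (inj_in_eq inj).
Qed.

Lemma mtilde_mmp {X Y : choiceType} (f : {mset X} -> {mset Y}) (P : {mset {mset X}}) :
  {in P &, injective f} -> mtilde (mmp f P) = mtilde P.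
Proof.
move=> inj; apply: mtilde_perm.
apply: perm_trans (perm_map _ (finsupp_mmp inj)) _; rewrite -map_comp.
rewrite (_ : [seq _ | _ <- _] = [seq P A | A <- finsupp P]) //.
apply/eq_in_map => A; rewrite msuppE => AP /=; exact: mmp_inj_eq.
Qed.

Local Open Scope ring_scope.

Definition Fm {X : choiceType} (M : {mset X}) : Symf :=
  \prod_(x <- finsupp M) hn (M x).

Lemma hl_mtilde {X : choiceType} (P : {mset {mset X}}) : hl (mtilde P) = Fm P.
Proof. by rewrite /hl /mtilde (perm_big _ (permEl (perm_sort _ _))) big_map. Qed.

Lemma mpart_mmp {X Y : choiceType} (f : X -> Y) (M : {mset X}) (P : {mset {mset X}}) :
  is_mpart M P -> is_mpart (mmp f M) (mmp (mmp f) P).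
Proof.
move=> hP; apply: mpart_intro => [B /mmpP [A AP ->]|y].
  by rewrite mmp_eq0 (mpart_nz hP).
rewrite big_mmp big_mmp (mpart_sum _ _ hP); apply: eq_bigr => A _.
by rewrite big_mmp.
Qed.

Lemma relabel (ht : seq nat -> Symf) {X Y : choiceType} (f : X -> Y) (g : Y -> X)
  (M : {mset X}) : {in M, cancel f g} ->
  \sum_(s \in is_mpart M) ht (mtilde s) = \sum_(t \in is_mpart (mmp f M)) ht (mtilde t).
Proof.
move=> fg.
have cA : forall P, is_mpart M P -> {in P, cancel (mmp f) (mmp g)}.
  move=> P hP A AP; apply: mmp_cancel => x xA; apply: fg; exact: mpart_mem hP AP xA.
rewrite (reindex_fsbig (mmp (mmp f)) (is_mpart M)); last first.
  split.
  - by move=> P hP; apply: mpart_mmp.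
  - move=> P1 P2 /set_mem h1 /set_mem h2 e.
    by rewrite -(mmp_cancel (cA _ h1)) e (mmp_cancel (cA _ h2)).
  - move=> Q hQ; exists (mmp (mmp g) Q).
      by rewrite -[M](mmp_cancel fg); apply: mpart_mmp.
    rewrite mmp_comp; rewrite (eq_in_mmp (g := id)) ?mmp_id // => B BQ /=.
    apply: mmp_cancel => y yB; have := mpart_mem hQ BQ yB.
    by rewrite mem_mmp => /mapP [x xM ->] /=; rewrite fg.
apply: eq_fsbigr => P /set_mem hP; congr ht; apply/esym/mtilde_mmp => A B AP BP e.
by rewrite -(cA _ hP A AP) e (cA _ hP B BP).
Qed.
End Part4.

Section Part5.
Local Open Scope mset_scope.

Lemma part0 {X : choiceType} : is_mpart (mset0 : {mset X}) = [set mset0]%classic.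
Proof.
apply/seteqP; split => P.
- move=> hP; apply/eqP; apply/negPn/negP => /mset_neq0P [A AP].
  have /mset_neq0P [x xA] := mpart_nz hP AP.
  by have := mpart_mem hP AP xA; rewrite in_mset0.
- move=> ->; apply: mpart_intro => [A|x]; first by rewrite in_mset0.
  by rewrite !enum_mset0 !big_nil.
Qed.

Lemma finsupp_mset0 {X : choiceType} : finsupp (mset0 : {mset X}) = fset0.
Proof. by apply/fsetP => x; rewrite msuppE in_mset0 inE. Qed.

Local Open Scope ring_scope.

Lemma rec_gen (ht : seq nat -> Symf)
  (hyp : forall l : seq nat, is_partition l ->
     hl l = \sum_(sigma \in is_mpart (mset_of_part l)) ht (mtilde sigma))
  {X : choiceType} (M : {mset X}) :
  Fm M = \sum_(s \in is_mpart M) ht (mtilde s).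
Proof.
case: (eqVneq M mset0) => [->|].
  have mt0 : forall Y : choiceType, mtilde (mset0 : {mset {mset Y}}) = [::].
    by move=> Y; rewrite /mtilde finsupp_mset0.
  rewrite part0 fsbig_set1 /Fm mt0 finsupp_mset0 big_seq_fset0.
  have h0 := hyp [::] isT; rewrite /hl big_nil in h0.
  have e0 : mset_of_part [::] = mset0 by apply/msetP => x; rewrite mset_seqE mset0E.
  by rewrite e0 part0 fsbig_set1 mt0 in h0.
move=> /mset_neq0P [x0 x0M].
set s := sort (relpre M geq) (finsupp M).
have us : uniq s by rewrite sort_uniq fset_uniq.
have ms : forall x, (x \in s) = (x \in M) by move=> x; rewrite mem_sort msuppE.
set l := [seq M x | x <- s].
have hl_l : hl l = Fm M.
  by rewrite /hl /Fm big_map (perm_big _ (permEl (perm_sort _ _))).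
have pl : is_partition l.
  apply/andP; split.
    have -> : l = sort geq [seq M x | x <- finsupp M] by rewrite sort_map.
    exact: sort_sorted geq_total _.
  apply/allP => n /mapP [x]; rewrite ms => xM ->; by rewrite mset_gt0.
pose f := fun x => (index x s).+1.
pose g := fun i => nth x0 s i.-1.
have fg : {in M, cancel f g} by move=> x xM; rewrite /f /g /= nth_index // ms.
have em : mmp f M = mset_of_part l.
  apply/msetP => j; rewrite mmpE /mset_of_part mset_seqE count_flatten -map_comp sumn_map.
  have ps : perm_eq (enum_fset (finsupp M)) s by rewrite perm_sym; exact: permEl (perm_sort _ _).
  rewrite sum_mset (perm_big _ ps).
  rewrite -[in LHS](mkseq_nth x0 s) /mkseq big_map size_map.
  apply: eq_big_seq => i; rewrite mem_iota add0n => /andP [_ lt] /=.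
  by rewrite count_nseq /f index_uniq // (nth_map x0) // mulnC.
by rewrite -hl_l hyp // -em -(relabel ht fg).
Qed.
End Part5.

Section Part6.
Local Open Scope mset_scope.

Lemma finsupp_msetD {X : choiceType} (P Q : {mset X}) :
  (forall A, A \in P -> A \notin Q) ->
  perm_eq (finsupp (P `+` Q)) (enum_fset (finsupp P) ++ enum_fset (finsupp Q)).
Proof.
move=> dj; apply: uniq_perm; first exact: fset_uniq.
  rewrite cat_uniq !fset_uniq andbT /=; apply/hasPn => x; rewrite !msuppE => xQ.
  by apply/negP => /dj; rewrite xQ.
by move=> x; rewrite mem_cat !msuppE in_msetD.
Qed.

Local Open Scope ring_scope.

Lemma Fm_add {X : choiceType} (P Q : {mset X}) :
  (forall A, A \in P -> A \notin Q) -> Fm (P `+` Q) = Fm P * Fm Q.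
Proof.
move=> dj; rewrite /Fm (perm_big _ (finsupp_msetD dj)) big_cat /=.
have e1 : \prod_(x <- finsupp P) hn ((P `+` Q) x) = \prod_(x <- finsupp P) hn (P x).
  apply: eq_big_seq => x; rewrite msuppE => xin; rewrite msetE2.
  by move: (dj x xin); rewrite -mset_eq0 => /eqP ->; rewrite addn0.
have e2 : \prod_(x <- finsupp Q) hn ((P `+` Q) x) = \prod_(x <- finsupp Q) hn (Q x).
  apply: eq_big_seq => x; rewrite msuppE => xin; rewrite msetE2.
  have : x \notin P by apply: contraL xin => /dj.
  by rewrite -mset_eq0 => /eqP ->.
exact: (f_equal2 (@GRing.mul _) e1 e2).
Qed.

Lemma fsum_fiber {I J : choiceType} (A : set I) (B : set J) (h : I -> J)
  (F : I -> Symf) :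
  finite_set A -> finite_set B -> (forall i, A i -> B (h i)) ->
  \sum_(i \in A) F i =
  \sum_(j \in B) \sum_(i \in [set i | A i /\ h i = j]%classic) F i.
Proof.
move=> fA fB hAB.
transitivity (\sum_(j \in B) \sum_(i \in A) (if i \in [set i | h i = j]%classic then F i else 0)); last first.
  by apply: eq_fsbigr => j _; rewrite -fsbig_mkcondr.
rewrite exchange_fsbig //; apply: eq_fsbigr => i /set_mem Ai.
rewrite (fsbigD1 (h i)) //; last exact: hAB.
rewrite (_ : i \in _ = true); last by apply/mem_set.
rewrite fsbig1; first by rewrite /= GRing.addr0.
move=> j [_ /= ne]; case: ifP => // /set_mem e.
by case: ne; rewrite e.
Qed.

Lemma fsum_prod {I J : choiceType} (A : set I) (B : set J) (f : I -> Symf) (g : J -> Symf) :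
  finite_set A -> finite_set B ->
  (\sum_(i \in A) f i) * (\sum_(j \in B) g j) =
  \sum_(p \in (A `*` B)%classic) f p.1 * g p.2.
Proof.
move=> fA fB; rewrite -(pair_fsbig _ (fun a b => (f a * g b)%R) fA fB).
rewrite [RHS]fsbig_finite //.
under [RHS]eq_bigr do rewrite fsbig_finite //.
rewrite (fsbig_finite _ _ fA) (fsbig_finite _ _ fB) big_distrl.
by apply: eq_bigr => a _; rewrite big_distrr.
Qed.
End Part6.

Section Part7.
Local Open Scope mset_scope.

Definition msplit {X : choiceType} (V W : pred X) (C : {mset X}) : {mset {mset X}} :=
  seq_mset [seq D <- [:: mrestr V C; mrestr W C] | D != mset0].

Lemma msplitE {X : choiceType} (V W : pred X) (C E : {mset X}) :
  msplit V W C E = (((mrestr V C != mset0) && (mrestr V C == E)) +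
                    ((mrestr W C != mset0) && (mrestr W C == E)))%N.
Proof.
rewrite /msplit mset_seqE /=.
by case: (mrestr V C != mset0); case: (mrestr W C != mset0); rewrite /= ?addn0.
Qed.

Lemma msplit_sym {X : choiceType} (V W : pred X) (C : {mset X}) :
  msplit V W C = msplit W V C.
Proof. by apply/msetP => E; rewrite !msplitE addnC. Qed.

Lemma msum_msplit {X : choiceType} (V W : pred X) (C : {mset X}) x :
  msum (msplit V W C) x = (mrestr V C x + mrestr W C x)%N.
Proof.
rewrite msumE /msplit big_seq_mset big_filter big_mkcond !big_cons big_nil /= addn0.
by case: eqP => [->|_]; case: eqP => [->|_]; rewrite ?mset0E.
Qed.

Lemma msum_single {X : choiceType} (A : {mset X}) : msum [mset A] = A.
Proof. by apply/msetP => x; rewrite msumE enum_msetn big_nseq /= addn0. Qed.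

Lemma msum_mset0 {X : choiceType} : msum (mset0 : {mset {mset X}}) = mset0.
Proof. by apply/msetP => x; rewrite msumE enum_mset0 big_nil mset0E. Qed.

Lemma msum_eq0 {X : choiceType} (B : {mset {mset X}}) :
  (forall A, A \in B -> A != mset0) -> (msum B == mset0) = (B == mset0).
Proof.
move=> h; case: (eqVneq B mset0) => [->|]; first by rewrite msum_mset0 eqxx.
move=> /mset_neq0P [A AB]; have /mset_neq0P [x xA] := h A AB.
apply/negbTE/mset_neq0P; exists x; rewrite in_mset msumE (big_rem A AB) /=.
by move: xA; rewrite in_mset => xA; apply: leq_trans xA (leq_addr _ _).
Qed.

Lemma mem_mrestr {X : choiceType} (U : pred X) (A : {mset X}) x :
  (x \in mrestr U A) = U x && (x \in A).
Proof. by rewrite !in_mset mrestrE; case: (U x). Qed.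

Lemma mrestr_mset0 {X : choiceType} (U : pred X) : mrestr U (mset0 : {mset X}) = mset0.
Proof. by apply/msetP => x; rewrite mrestrE mset0E if_same. Qed.
End Part7.

Section Part8.
Local Open Scope mset_scope.

Lemma dis_sym {X : choiceType} (S T : {mset X}) :
  (forall x, (0 < S x)%N -> T x = 0%N) -> (forall x, (0 < T x)%N -> S x = 0%N).
Proof.
move=> dis x Tx; apply/eqP; rewrite -leqn0 leqNgt; apply/negP => /dis Tx0.
by rewrite Tx0 in Tx.
Qed.

Lemma blk_restrS {X : choiceType} (S : {mset X}) (pi : {mset {mset X}}) (A : {mset X}) :
  is_mpart S pi -> A \in pi -> mrestr (Defs.msupp S) A = A.
Proof.
move=> hpi Api; apply/msetP => x; rewrite mrestrE /Defs.msupp.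
case: ifPn => // Sx; apply/esym/eqP; rewrite -leqn0.
by apply: leq_trans (mpart_le x hpi Api) _; rewrite leqNgt.
Qed.

Lemma blk_restrT {X : choiceType} (S T : {mset X}) (pi : {mset {mset X}}) (A : {mset X}) :
  (forall x, (0 < S x)%N -> T x = 0%N) ->
  is_mpart S pi -> A \in pi -> mrestr (Defs.msupp T) A = mset0.
Proof.
move=> dis hpi Api; apply/msetP => x; rewrite mrestrE /Defs.msupp mset0E.
case: ifPn => // Tx; apply/eqP; rewrite -leqn0 leqNgt; apply/negP => Ax.
have : (0 < S x)%N by apply: leq_trans Ax (mpart_le x hpi Api).
by move/dis => T0; rewrite T0 in Tx.
Qed.

Lemma blk_disj {X : choiceType} (S T : {mset X}) (pi tau : {mset {mset X}}) (A : {mset X}) :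
  (forall x, (0 < S x)%N -> T x = 0%N) ->
  is_mpart S pi -> is_mpart T tau -> A \in pi -> A \notin tau.
Proof.
move=> dis hpi htau Api; apply/negP => Atau.
have /mset_neq0P [x xA] := mpart_nz hpi Api.
have := mpart_mem hpi Api xA; rewrite in_mset => /dis T0.
have := mpart_le x htau Atau; rewrite T0 leqn0 => /eqP A0.
by move: xA; rewrite in_mset A0.
Qed.

Lemma blk_restr {X : choiceType} (S T : {mset X}) (pi tau : {mset {mset X}}) (A : {mset X}) x :
  (forall x, (0 < S x)%N -> T x = 0%N) ->
  is_mpart S pi -> is_mpart T tau -> A \in pi `+` tau ->
  (if (0 < S x)%N then A x else 0%N) = (if (0 < pi A)%N then A x else 0%N).
Proof.
move=> dis hpi htau; rewrite in_msetD => /orP [Api|Atau].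
- have -> : (0 < pi A)%N = true by rewrite -in_mset.
  by rewrite -[in RHS](blk_restrS hpi Api) mrestrE.
- have : A \notin pi by apply: (blk_disj (dis_sym dis) htau hpi Atau).
  rewrite in_mset -ltnNge ltnS leqn0 => /eqP ->.
  by rewrite /= -(mrestrE (Defs.msupp S)) (blk_restrT (dis_sym dis) htau Atau) mset0E.
Qed.

Lemma elems_nz {X : choiceType} (S T : {mset X}) (pi tau : {mset {mset X}})
  (sg : {mset {mset {mset X}}}) (B A : {mset X}) : True.
Proof. by []. Qed.

Lemma elem_nz {X : choiceType} (S T : {mset X}) (pi tau : {mset {mset X}})
  (sg : {mset {mset {mset X}}}) (B : {mset {mset X}}) (A : {mset X}) :
  is_mpart S pi -> is_mpart T tau -> is_mpart (pi `+` tau) sg ->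
  B \in sg -> A \in B -> A != mset0.
Proof.
move=> hpi htau hs BS AB; have := mpart_mem hs BS AB; rewrite in_msetD => /orP [].
- exact: mpart_nz hpi.
- exact: mpart_nz htau.
Qed.

Lemma restr_msum {X : choiceType} (S T : {mset X}) (pi tau : {mset {mset X}})
  (sg : {mset {mset {mset X}}}) (B : {mset {mset X}}) :
  (forall x, (0 < S x)%N -> T x = 0%N) ->
  is_mpart S pi -> is_mpart T tau -> is_mpart (pi `+` tau) sg -> B \in sg ->
  mrestr (Defs.msupp S) (msum B) = msum (mrestr (Defs.msupp pi) B).
Proof.
move=> dis hpi htau hs BS; apply/msetP => x; rewrite mrestrE !msumE big_mrestr.
have -> : (if Defs.msupp S x then \sum_(A <- B) A x else 0%N) =
          \sum_(A <- B) (if (0 < S x)%N then A x else 0%N).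
  by rewrite /Defs.msupp; case: ifP => // _; rewrite big1.
rewrite [RHS]big_mkcond /Defs.msupp /=; apply: eq_big_seq => A AB; rewrite (blk_restr x dis hpi htau (mpart_mem hs BS AB)).
by [].
Qed.

Lemma mmp_msum_sing {X : choiceType} (pi : {mset {mset X}}) : mmp msum (sing pi) = pi.
Proof.
rewrite /sing mmp_comp (eq_in_mmp (g := id)) ?mmp_id // => A _ /=.
exact: msum_single.
Qed.

Lemma psi_restr {X : choiceType} (S T : {mset X}) (pi tau : {mset {mset X}})
  (sg : {mset {mset {mset X}}}) :
  (forall x, (0 < S x)%N -> T x = 0%N) ->
  is_mpart S pi -> is_mpart T tau -> is_mpart (pi `+` tau) sg ->
  prestr (Defs.msupp pi) sg = sing pi ->
  prestr (Defs.msupp S) (mmp msum sg) = pi.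
Proof.
move=> dis hpi htau hs hr; apply/msetP => E.
rewrite -[in RHS](mmp_msum_sing pi) -hr mmpE big_prestr big_mkcond prestrE big_mmp.
apply: eq_big_seq => B BS /=.
rewrite (restr_msum dis hpi htau hs BS) msum_eq0; last first.
  move=> A; rewrite mem_mrestr => /andP [_ AB]; exact: elem_nz hpi htau hs BS AB.
by case: (_ != _).
Qed.

Lemma psi_part {X : choiceType} (S T : {mset X}) (pi tau : {mset {mset X}})
  (sg : {mset {mset {mset X}}}) :
  is_mpart S pi -> is_mpart T tau -> is_mpart (pi `+` tau) sg ->
  is_mpart (S `+` T) (mmp msum sg).
Proof.
move=> hpi htau hs; split.
  move=> C; rewrite -in_mset => /mmpP [B BS ->]; apply/eqP.
  rewrite msum_eq0 ?(mpart_nz hs BS) // => A AB; exact: elem_nz hpi htau hs BS AB.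
move=> x; rewrite big_mmp.
under eq_bigr => B _ do rewrite msumE.
rewrite -(mpart_sum _ _ hs) big_msetD msetE2.
by case: hpi => _ <-; case: htau => _ <-.
Qed.

Lemma blk_single {X : choiceType} (pi : {mset {mset X}}) (sg : {mset {mset {mset X}}})
  (B : {mset {mset X}}) :
  prestr (Defs.msupp pi) sg = sing pi -> B \in sg ->
  mrestr (Defs.msupp pi) B != mset0 ->
  exists2 A, A \in pi & mrestr (Defs.msupp pi) B = [mset A].
Proof.
move=> hr BS ne.
have : mrestr (Defs.msupp pi) B \in prestr (Defs.msupp pi) sg.
  rewrite in_mset prestrE (big_rem B BS) /= ne eqxx; exact: leq_addr.
by rewrite hr => /mmpP [A Api ->]; exists A.
Qed.

Lemma restr_count {X : choiceType} (S : {mset X}) (pi : {mset {mset X}})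
  (sg : {mset {mset {mset X}}}) (B : {mset {mset X}}) (E : {mset X}) :
  is_mpart S pi -> prestr (Defs.msupp pi) sg = sing pi -> B \in sg ->
  ((msum (mrestr (Defs.msupp pi) B) != mset0) && (msum (mrestr (Defs.msupp pi) B) == E)
    : nat) = mrestr (Defs.msupp pi) B E.
Proof.
move=> hpi hr BS; case: (eqVneq (mrestr (Defs.msupp pi) B) mset0) => [->|ne].
  by rewrite msum_mset0 eqxx mset0E.
have [A Api ->] := blk_single hr BS ne.
rewrite msum_single (mpart_nz hpi Api) msetnE eq_sym /=.
by case: (E == A).
Qed.

Lemma psi_cancel {X : choiceType} (S T : {mset X}) (pi tau : {mset {mset X}})
  (sg : {mset {mset {mset X}}}) (B : {mset {mset X}}) :
  (forall x, (0 < S x)%N -> T x = 0%N) ->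
  is_mpart S pi -> is_mpart T tau -> is_mpart (pi `+` tau) sg ->
  prestr (Defs.msupp pi) sg = sing pi -> prestr (Defs.msupp tau) sg = sing tau ->
  B \in sg -> msplit (Defs.msupp S) (Defs.msupp T) (msum B) = B.
Proof.
move=> dis hpi htau hs hr hr' BS.
have hs' : is_mpart (tau `+` pi) sg by rewrite msetDC.
apply/msetP => E; rewrite msplitE (restr_msum dis hpi htau hs BS).
rewrite (restr_msum (dis_sym dis) htau hpi hs' BS).
rewrite (restr_count E hpi hr BS) (restr_count E htau hr' BS) !mrestrE /Defs.msupp.
case: (boolP (E \in B)) => EB; last first.
  by move: EB; rewrite -mset_eq0 => /eqP ->; rewrite !if_same.
have := mpart_mem hs BS EB; rewrite in_msetD => /orP [] Ein.
- have := Ein; rewrite in_mset => ->.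
  have : E \notin tau by exact: (blk_disj dis hpi htau Ein).
  by rewrite in_mset -ltnNge ltnS leqn0 => /eqP ->; rewrite addn0.
- have := Ein; rewrite in_mset => ->.
  have : E \notin pi by exact: (blk_disj (dis_sym dis) htau hpi Ein).
  by rewrite in_mset -ltnNge ltnS leqn0 => /eqP ->.
Qed.
End Part8.

Section Part9.
Local Open Scope mset_scope.

Lemma msum_split_id {X : choiceType} (S T : {mset X}) (th : {mset {mset X}}) (C : {mset X}) :
  (forall x, (0 < S x)%N -> T x = 0%N) -> is_mpart (S `+` T) th -> C \in th ->
  msum (msplit (Defs.msupp S) (Defs.msupp T) C) = C.
Proof.
move=> dis hth Cth; apply/msetP => x; rewrite msum_msplit !mrestrE /Defs.msupp.
case: (boolP (x \in C)) => xC; last first.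
  by move: xC; rewrite -mset_eq0 => /eqP ->; rewrite !if_same.
have := mpart_mem hth Cth xC; rewrite in_msetD !in_mset => /orP [] h.
- by rewrite h (dis x h) /= addn0.
- by rewrite h (dis_sym dis h) /=.
Qed.

Lemma restr_in_pi {X : choiceType} (S : {mset X}) (pi th : {mset {mset X}}) (C : {mset X}) :
  prestr (Defs.msupp S) th = pi -> C \in th -> mrestr (Defs.msupp S) C != mset0 ->
  mrestr (Defs.msupp S) C \in pi.
Proof.
move=> hr Cth ne; rewrite -hr in_mset prestrE (big_rem C Cth) /= ne eqxx.
exact: leq_addr.
Qed.

Lemma restrT_notin {X : choiceType} (S T : {mset X}) (pi : {mset {mset X}}) (C : {mset X}) :
  (forall x, (0 < S x)%N -> T x = 0%N) -> is_mpart S pi ->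
  mrestr (Defs.msupp T) C != mset0 -> mrestr (Defs.msupp T) C \notin pi.
Proof.
move=> dis hpi /mset_neq0P [x]; rewrite mem_mrestr => /andP [Tx xC].
apply/negP => hin.
have xS : x \in S by apply: (mpart_mem hpi hin); rewrite mem_mrestr Tx xC.
move: xS; rewrite in_mset => /dis T0; by rewrite /Defs.msupp T0 in Tx.
Qed.

Lemma restrU_split {X : choiceType} (S T : {mset X}) (pi th : {mset {mset X}}) (C : {mset X}) :
  (forall x, (0 < S x)%N -> T x = 0%N) -> is_mpart S pi ->
  prestr (Defs.msupp S) th = pi -> C \in th ->
  mrestr (Defs.msupp pi) (msplit (Defs.msupp S) (Defs.msupp T) C) =
  if mrestr (Defs.msupp S) C != mset0 then [mset mrestr (Defs.msupp S) C] else mset0.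
Proof.
move=> dis hpi hr Cth; apply/msetP => D; rewrite mrestrE msplitE /Defs.msupp.
set a := mrestr (fun x => (0 < S x)%N) C; set b := mrestr (fun x => (0 < T x)%N) C.
have hb : (b != mset0) && (b == D) -> (pi D = 0)%N.
  move=> /andP [bn /eqP <-]; apply/eqP; rewrite -leqn0 leqNgt -in_mset.
  exact: (restrT_notin dis hpi bn).
case: (boolP (a != mset0)) => an /=.
- have ain := restr_in_pi hr Cth an; rewrite msetnE.
  case: (eqVneq D a) => [De|ne].
    subst D; have pa : (0 < pi a)%N by rewrite -in_mset.
    rewrite pa /=; case hbb: ((b != mset0) && (b == a)) => //.
    by have := hb hbb => h; rewrite h in pa.
  case: ifP => // pD.
  case hbb: ((b != mset0) && (b == D)) => //.
  by have := hb hbb => h; rewrite h in pD.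
- rewrite mset0E; case: ifP => // pD.
  case hbb: ((b != mset0) && (b == D)) => //.
  by have := hb hbb => h; rewrite h in pD.
Qed.

Lemma phi_part {X : choiceType} (S T : {mset X}) (pi tau th : {mset {mset X}}) :
  (forall x, (0 < S x)%N -> T x = 0%N) -> is_mpart (S `+` T) th ->
  prestr (Defs.msupp S) th = pi -> prestr (Defs.msupp T) th = tau ->
  is_mpart (pi `+` tau) (mmp (msplit (Defs.msupp S) (Defs.msupp T)) th).
Proof.
move=> dis hth hr hr'; split.
  move=> D; rewrite -in_mset => /mmpP [C Cth ->] e.
  have := msum_split_id dis hth Cth; rewrite e msum_mset0 => C0.
  by have := mpart_nz hth Cth; rewrite -C0 eqxx.
move=> A; rewrite msetE2 big_mmp.
under eq_bigr => C _ do rewrite msplitE.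
by rewrite big_split /= -!prestrE hr hr'.
Qed.

Lemma mset1_neq0 {X : choiceType} (a : X) : [mset a] != mset0.
Proof. by apply/mset_neq0P; exists a; rewrite in_mset1. Qed.

Lemma phi_restr {X : choiceType} (S T : {mset X}) (pi th : {mset {mset X}}) :
  (forall x, (0 < S x)%N -> T x = 0%N) -> is_mpart S pi ->
  prestr (Defs.msupp S) th = pi ->
  prestr (Defs.msupp pi) (mmp (msplit (Defs.msupp S) (Defs.msupp T)) th) = sing pi.
Proof.
move=> dis hpi hr; apply/msetP => E; rewrite prestrE big_mmp /sing mmpE.
have e : \sum_(A <- pi) ([mset A] == E) =
         \sum_(A <- prestr (Defs.msupp S) th) ([mset A] == E) by rewrite hr.
rewrite e big_prestr [RHS]big_mkcond; apply: eq_big_seq => C Cth.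
rewrite (restrU_split dis hpi hr Cth).
case: (boolP (mrestr (Defs.msupp S) C != mset0)) => h /=.
  by rewrite mset1_neq0.
by rewrite eqxx.
Qed.

Lemma psi_phi {X : choiceType} (S T : {mset X}) (th : {mset {mset X}}) :
  (forall x, (0 < S x)%N -> T x = 0%N) -> is_mpart (S `+` T) th ->
  mmp msum (mmp (msplit (Defs.msupp S) (Defs.msupp T)) th) = th.
Proof.
move=> dis hth; rewrite mmp_comp (eq_in_mmp (g := id)) ?mmp_id // => C Cth /=.
exact: msum_split_id dis hth Cth.
Qed.

Local Open Scope ring_scope.

Lemma bij_sum (ht : seq nat -> Symf) {X : choiceType} (S T : {mset X})
  (pi tau : {mset {mset X}}) :
  (forall x, (0 < S x)%N -> T x = 0%N) -> is_mpart S pi -> is_mpart T tau ->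
  \sum_(s \in msharp pi tau (sing pi) (sing tau)) ht (mtilde s) =
  \sum_(t \in msharp S T pi tau) ht (mtilde t).
Proof.
move=> dis hpi htau.
have dis' := dis_sym dis.
have canc : forall s, msharp pi tau (sing pi) (sing tau) s ->
    {in s, cancel msum (msplit (Defs.msupp S) (Defs.msupp T))}.
  move=> s [hs [hr hr']] B BS; exact: psi_cancel dis hpi htau hs hr hr' BS.
rewrite (reindex_fsbig (mmp msum) (msharp pi tau (sing pi) (sing tau))); last first.
  split.
  - move=> s [hs [hr hr']]; split; first exact: psi_part hpi htau hs.
    split; first exact: psi_restr dis hpi htau hs hr.
    apply: (psi_restr dis' htau hpi _ hr'); by rewrite msetDC.
  - move=> s1 s2 /set_mem h1 /set_mem h2 e.
    by rewrite -(mmp_cancel (canc _ h1)) e (mmp_cancel (canc _ h2)).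
  - move=> t [ht1 [hr hr']].
    exists (mmp (msplit (Defs.msupp S) (Defs.msupp T)) t); last exact: psi_phi.
    split; first exact: phi_part.
    split; first exact: phi_restr.
    have -> : mmp (msplit (Defs.msupp S) (Defs.msupp T)) t =
              mmp (msplit (Defs.msupp T) (Defs.msupp S)) t.
      by apply: eq_in_mmp => C _; rewrite msplit_sym.
    apply: (phi_restr dis' htau hr'); by [].
apply: eq_fsbigr => s /set_mem hs; congr ht; apply/esym/mtilde_mmp => A B AS BS e.
by rewrite -(canc _ hs A AS) e (canc _ hs B BS).
Qed.
End Part9.

Section Part10.
Local Open Scope mset_scope.

Lemma prestr_part {X : choiceType} (pi tau : {mset X}) (sg : {mset {mset X}}) :
  (forall a, (0 < pi a)%N -> tau a = 0%N) -> is_mpart (pi `+` tau) sg ->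
  is_mpart pi (prestr (Defs.msupp pi) sg).
Proof.
move=> dis hs; split.
  move=> D; rewrite -in_mset /prestr (perm_mem (perm_eq_seq_mset _)).
  by move/mapP => [A]; rewrite mem_filter => /andP [ne _] ->; apply/eqP.
move=> a; rewrite big_prestr big_mkcond /=.
rewrite (eq_bigr (fun B => mrestr (Defs.msupp pi) B a)); last first.
  by move=> B _; case: (eqVneq (mrestr (Defs.msupp pi) B) mset0) => [->|]; rewrite ?mset0E.
rewrite (eq_bigr (fun B : {mset X} => if Defs.msupp pi a then B a else 0%N)); last first.
  by move=> B _; rewrite mrestrE.
have -> : \sum_(B <- sg) (if Defs.msupp pi a then B a else 0%N) =
          if Defs.msupp pi a then \sum_(B <- sg) B a else 0%N.
  by case: ifP => // _; rewrite big1.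
case: hs => _ <-; rewrite msetE2 /Defs.msupp.
case: ifPn => [pa|]; first by rewrite (dis a pa) addn0.
by rewrite -ltnNge ltnS leqn0 => /eqP.
Qed.

Local Open Scope ring_scope.

Lemma main_claim (ht : seq nat -> Symf)
  (hyp : forall l : seq nat, is_partition l ->
     hl l = \sum_(sigma \in is_mpart (mset_of_part l)) ht (mtilde sigma)) :
  forall n (X : choiceType) (S T : {mset X}) (pi tau : {mset {mset X}}),
  (forall x : X, (0 < S x)%N -> T x = 0%N) ->
  is_mpart S pi -> is_mpart T tau ->
  (size (enum_mset pi) + size (enum_mset tau))%N = n ->
  ht (mtilde pi) * ht (mtilde tau) =
    \sum_(theta \in msharp S T pi tau) ht (mtilde theta).
Proof.
elim/ltn_ind => n IH X S T pi tau dis hpi htau hn.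
have dj : forall A, A \in pi -> A \notin tau by move=> A; apply: blk_disj dis hpi htau.
have disp : forall A, (0 < pi A)%N -> tau A = 0%N.
  move=> A; rewrite -in_mset => /dj; rewrite in_mset -ltnNge ltnS leqn0 => /eqP.
  done.
have disp' := dis_sym disp.
pose h := fun s : {mset {mset {mset X}}} =>
  (prestr (Defs.msupp pi) s, prestr (Defs.msupp tau) s).
have fin1 := fin_part pi; have fin2 := fin_part tau; have fin12 := fin_part (pi `+` tau).
have key : \sum_(p \in (is_mpart pi `*` is_mpart tau)%classic)
              ht (mtilde p.1) * ht (mtilde p.2) =
           \sum_(p \in (is_mpart pi `*` is_mpart tau)%classic)
              \sum_(s \in msharp pi tau p.1 p.2) ht (mtilde s).
  rewrite -(fsum_prod (fun a => ht (mtilde a)) (fun b => ht (mtilde b)) fin1 fin2) -!(rec_gen hyp) -(Fm_add dj) (rec_gen hyp).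
  rewrite (fsum_fiber (h := h) (fun s => ht (mtilde s)) fin12 (finite_setX fin1 fin2)); last first.
    move=> s hs; split; first exact: prestr_part disp hs.
    apply: (prestr_part disp'); by rewrite msetDC.
  apply: eq_fsbigr => -[a b] _; apply: eq_fsbigl.
  apply/funext => s; apply/propext; rewrite /msharp /h /=; split.
    by case=> hs [-> ->].
  by case=> hs [-> ->].
have p0 : (is_mpart pi `*` is_mpart tau)%classic (sing pi, sing tau).
  by split; apply: sing_part.
have finX := finite_setX fin1 fin2.
rewrite (fsbigD1 (sing pi, sing tau)) // [RHS](fsbigD1 (sing pi, sing tau)) //= in key.
have rest : \sum_(p \in ((is_mpart pi `*` is_mpart tau) `\ (sing pi, sing tau))%classic)
              ht (mtilde p.1) * ht (mtilde p.2) =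
            \sum_(p \in ((is_mpart pi `*` is_mpart tau) `\ (sing pi, sing tau))%classic)
              \sum_(s \in msharp pi tau p.1 p.2) ht (mtilde s).
  apply: eq_fsbigr => -[a b] /set_mem [[/= ha hb] ne].
  have la := mpart_size_le ha; have lb := mpart_size_le hb.
  have lt : (size (enum_mset a) + size (enum_mset b) < n)%N.
    rewrite -hn; case: (eqVneq a (sing pi)) => [ea|na].
      have nb : b <> sing tau by move=> eb; apply: ne; rewrite ea eb.
      have lt' : (size (enum_mset b) < size (enum_mset tau))%N.
        rewrite ltn_neqAle lb andbT; apply/eqP => e; apply: nb; exact: mpart_size_eq hb e.
      by rewrite -addnS; apply: leq_add la lt'.
    have lt' : (size (enum_mset a) < size (enum_mset pi))%N.
      rewrite ltn_neqAle la andbT; apply/eqP => e; move/eqP: na; apply; exact: mpart_size_eq ha e.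
    by rewrite -addSn; apply: leq_add lt' lb.
  exact: (IH _ lt _ pi tau a b disp ha hb erefl).
rewrite rest in key; move/GRing.addIr: key => key.
have e1 : mtilde (sing pi) = mtilde pi.
  by apply: mtilde_mmp => A B _ _; apply: (msetn_inj (ltn0Sn 0)).
have e2 : mtilde (sing tau) = mtilde tau.
  by apply: mtilde_mmp => A B _ _; apply: (msetn_inj (ltn0Sn 0)).
rewrite -(bij_sum ht dis hpi htau); rewrite e1 e2 in key; exact: key.
Qed.
End Part10.

Unset Implicit Arguments.
Local Open Scope mset_scope.
Local Open Scope ring_scope.

Theorem proposition21 :
  forall ht : seq nat -> Symf,
  (* ht is the induced trivial character basis h~: the defining recursion *)
  (forall l : seq nat, is_partition l ->
     hl l = \sum_(sigma \in is_mpart (mset_of_part l)) ht (mtilde sigma)) ->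
  forall (K : choiceType) (S T : {mset K}) (pi tau : {mset {mset K}}),
  (forall x : K, (0 < S x)%N -> T x = 0%N) ->
  is_mpart S pi -> is_mpart T tau ->
  ht (mtilde pi) * ht (mtilde tau) =
    \sum_(theta \in msharp S T pi tau) ht (mtilde theta).
Proof.
move=> ht hyp K S T pi tau dis hpi htau.
eapply main_claim; [exact hyp | exact dis | exact hpi | exact htau | reflexivity].
Qed.
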